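(* Let $A>0$, $\phi>0$, $0<\gamma<1$, and $\alpha,\beta>0$ with $\alpha+\beta<1$. Consider the map $F_S:(0,\infty)^2\to(0,\infty)^2$, $$F_S(k,N)=\left(A\left[\left(\frac{\alpha}{1-\alpha}\right)\phi\, k^{2}N^{\gamma}\right]^{\alpha}k^{\beta},\ \left(\frac{1-\alpha}{2\phi k}\right)N^{1-\gamma}\right),$$ which defines the dynamical system $(k_{t+1},N_{t+1})=F_S(k_t,N_t)$. Then $F_S$ has a unique fixed point $(\bar k_S,\bar N_S)$ with $\bar k_S>0$, $\bar N_S>0$, and it is given by $$\bar k_S=\left(A^{1/\alpha}\frac{\alpha}{2}\right)^{\frac{\alpha}{1-\beta-\alpha}},\qquad \bar N_S=A^{\frac{-1}{(1-\beta-\alpha)\gamma}}\left(\frac{1-\alpha}{2\phi}\right)^{\frac{1-\beta-2\alpha}{(1-\beta-\alpha)\gamma}}\left[\left(\frac{\alpha}{1-\alpha}\right)\phi\right]^{\frac{-\alpha}{(1-\beta-\alpha)\gamma}}.$$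
   Context: This is an overlapping-generations model in which $k_t$ is human capital per adult and $N_t$ the adult population at generation $t$, in the case where the father's and mother's childcare times are perfect substitutes. Households' optimal fertility and education spending are $n^*(k,N)=\frac{1-\alpha}{2\phi kN^{\gamma}}$ and $e^*(k,N)=\frac{\alpha}{1-\alpha}\phi k^2N^{\gamma}$, and the dynamics are $k_{t+1}=A\,e^*(k_t,N_t)^{\alpha}k_t^{\beta}$, $N_{t+1}=n^*(k_t,N_t)N_t$, which is the map $F_S$ above. An ''economically meaningful'' equilibrium is a fixed point with both coordinates strictly positive. *)

(* Defs.v *)
From Stdlib Require Import Reals.
Open Scope R_scope.

Definition F_S (A phi gamma alpha beta : R) (k N : R) : R * R :=
  ( A * Rpower ((alpha / (1 - alpha)) * phi * (k ^ 2) * Rpower N gamma) alpha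
      * Rpower k beta,
    ((1 - alpha) / (2 * phi * k)) * Rpower N (1 - gamma) ).

Definition kbar_S (A alpha beta : R) : R :=
  Rpower (Rpower A (1 / alpha) * (alpha / 2)) (alpha / (1 - beta - alpha)).

Definition Nbar_S (A phi gamma alpha beta : R) : R :=
  Rpower A (-1 / ((1 - beta - alpha) * gamma))
  * Rpower ((1 - alpha) / (2 * phi))
           ((1 - beta - 2 * alpha) / ((1 - beta - alpha) * gamma))
  * Rpower ((alpha / (1 - alpha)) * phi) (- alpha / ((1 - beta - alpha) * gamma)).

(* Main.v *)
Require Import Defs.
From Stdlib Require Import Reals Lra Psatz.
Open Scope R_scope.

Lemma alg (a c d al be ga x y : R) :
  0 < ga < 1 -> 0 < al -> 0 < be -> al + be < 1 ->
  (a + al * (c + 2 * x + ga * y) + be * x = x /\ d - x + (1 - ga) * y = y) <->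
  (x = al / (1 - be - al) * (1 / al * a + (c + d)) /\
   y = -1 / ((1 - be - al) * ga) * a
       + (1 - be - 2 * al) / ((1 - be - al) * ga) * d
       + (- al / ((1 - be - al) * ga)) * c).
Proof.
  intros [Hg Hg1] Ha Hb Hab.
  assert (HD : 1 - be - al <> 0) by lra.
  assert (Hg0 : ga <> 0) by lra.
  assert (Ha0 : al <> 0) by lra.
  split.
  - intros [E1 E2].
    assert (E3 : ga * y = d - x) by lra.
    assert (E4 : x * (1 - be - al) = a + al * (c + d)) by nra.
    assert (Ex : x = al / (1 - be - al) * (1 / al * a + (c + d))).
    { apply (Rmult_eq_reg_r (1 - be - al)); [|exact HD].
      rewrite E4. field. auto. }
    split; [exact Ex|].
    apply (Rmult_eq_reg_r ga); [|exact Hg0].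
    rewrite (Rmult_comm y ga), E3, Ex. field. auto.
  - intros [Ex Ey]. subst x y. split; field; auto.
Qed.

Lemma ln_Rpower (x y : R) : ln (Rpower x y) = y * ln x.
Proof. unfold Rpower. apply ln_exp. Qed.

Lemma Rpower_pos' (x y : R) : 0 < Rpower x y.
Proof. unfold Rpower. apply exp_pos. Qed.

Lemma pos_eq_ln (u v : R) : 0 < u -> 0 < v -> (u = v <-> ln u = ln v).
Proof.
  intros Hu Hv; split; intro H; [now rewrite H| now apply ln_inv].
Qed.

Theorem proposition1 (A phi gamma alpha beta : R) :
  0 < A -> 0 < phi -> 0 < gamma < 1 -> 0 < alpha -> 0 < beta ->
  alpha + beta < 1 ->
  0 < kbar_S A alpha beta /\ 0 < Nbar_S A phi gamma alpha beta /\
  (forall k N : R, 0 < k -> 0 < N ->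
     (F_S A phi gamma alpha beta k N = (k, N) <->
      (k = kbar_S A alpha beta /\ N = Nbar_S A phi gamma alpha beta))).
Proof.
  intros HA Hp Hg Ha Hb Hab.
  assert (Hc : 0 < alpha / (1 - alpha) * phi).
  { apply Rmult_lt_0_compat; [apply Rdiv_lt_0_compat|]; lra. }
  assert (Hd : 0 < (1 - alpha) / (2 * phi)).
  { apply Rdiv_lt_0_compat; lra. }
  assert (Hh : ln (alpha / 2) = ln (alpha / (1 - alpha) * phi) + ln ((1 - alpha) / (2 * phi))).
  { rewrite <- ln_mult by assumption. f_equal. field. split; lra. }
  split; [apply Rpower_pos'|].
  split; [unfold Nbar_S; repeat apply Rmult_lt_0_compat; apply Rpower_pos'|].
  intros k N Hk HN.
  assert (HP : 0 < alpha / (1 - alpha) * phi * k ^ 2 * Rpower N gamma).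
  { apply Rmult_lt_0_compat; [apply Rmult_lt_0_compat; [exact Hc|apply pow_lt; exact Hk]|apply Rpower_pos']. }
  assert (H1 : 0 < A * Rpower (alpha / (1 - alpha) * phi * k ^ 2 * Rpower N gamma) alpha
      * Rpower k beta).
  { repeat apply Rmult_lt_0_compat; try assumption; apply Rpower_pos'. }
  assert (H2 : 0 < (1 - alpha) / (2 * phi * k) * Rpower N (1 - gamma)).
  { apply Rmult_lt_0_compat; [apply Rdiv_lt_0_compat|apply Rpower_pos']; try lra.
    repeat apply Rmult_lt_0_compat; lra. }
  assert (L1 : ln (A * Rpower (alpha / (1 - alpha) * phi * k ^ 2 * Rpower N gamma) alpha
      * Rpower k beta) = ln A + alpha * (ln (alpha / (1 - alpha) * phi) + 2 * ln k + gamma * ln N)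
        + beta * ln k).
  { assert (HAP : 0 < A * Rpower (alpha / (1 - alpha) * phi * k ^ 2 * Rpower N gamma) alpha)
      by (apply Rmult_lt_0_compat; [exact HA|apply Rpower_pos']).
    rewrite (ln_mult _ _ HAP (Rpower_pos' k beta)).
    rewrite (ln_mult _ _ HA (Rpower_pos' _ _)).
    rewrite !ln_Rpower.
    assert (Hck : 0 < alpha / (1 - alpha) * phi * k ^ 2)
      by (apply Rmult_lt_0_compat; [exact Hc|apply pow_lt; exact Hk]).
    rewrite (ln_mult _ _ Hck (Rpower_pos' N gamma)).
    rewrite (ln_mult _ _ Hc (pow_lt _ 2 Hk)).
    rewrite ln_pow by assumption. rewrite ln_Rpower. simpl INR. ring. }
  assert (L2 : ln ((1 - alpha) / (2 * phi * k) * Rpower N (1 - gamma))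
      = ln ((1 - alpha) / (2 * phi)) - ln k + (1 - gamma) * ln N).
  { rewrite ln_mult; [|apply Rdiv_lt_0_compat; [lra|]; repeat apply Rmult_lt_0_compat; lra
                     | apply Rpower_pos'].
    rewrite ln_Rpower.
    replace ((1 - alpha) / (2 * phi * k)) with ((1 - alpha) / (2 * phi) * / k)
      by (field; split; lra).
    rewrite ln_mult by (try apply Rinv_0_lt_compat; assumption).
    rewrite ln_Rinv by assumption. ring. }
  assert (LK : ln (kbar_S A alpha beta) =
     alpha / (1 - beta - alpha) * (1 / alpha * ln A + (ln (alpha / (1 - alpha) * phi) + ln ((1 - alpha) / (2 * phi))))).
  { unfold kbar_S. rewrite ln_Rpower, ln_mult by (try apply Rpower_pos'; lra).
    rewrite ln_Rpower, Hh. reflexivity. }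
  assert (LN : ln (Nbar_S A phi gamma alpha beta) =
     -1 / ((1 - beta - alpha) * gamma) * ln A
       + (1 - beta - 2 * alpha) / ((1 - beta - alpha) * gamma) * ln ((1 - alpha) / (2 * phi))
       + (- alpha / ((1 - beta - alpha) * gamma)) * ln (alpha / (1 - alpha) * phi)).
  { unfold Nbar_S. rewrite !ln_mult by (try apply Rmult_lt_0_compat; apply Rpower_pos').
    rewrite !ln_Rpower. reflexivity. }
  assert (HNb : 0 < Nbar_S A phi gamma alpha beta)
    by (unfold Nbar_S; repeat apply Rmult_lt_0_compat; apply Rpower_pos').
  assert (HKb : 0 < kbar_S A alpha beta) by apply Rpower_pos'.
  pose proof (alg (ln A) (ln (alpha / (1 - alpha) * phi)) (ln ((1 - alpha) / (2 * phi)))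
            alpha beta gamma (ln k) (ln N) Hg Ha Hb Hab) as AL.
  rewrite <- LK, <- LN, <- L1, <- L2 in AL.
  unfold F_S.
  split.
  - intro E. injection E as E1 E2.
    destruct (proj1 AL (conj (f_equal ln E1) (f_equal ln E2))) as [F1 F2].
    split; apply ln_inv; assumption.
  - intros [E1 E2].
    destruct (proj2 AL (conj (f_equal ln E1) (f_equal ln E2))) as [F1 F2].
    apply ln_inv in F1; [|assumption|assumption].
    apply ln_inv in F2; [|assumption|assumption]. rewrite F1, F2. reflexivity.
Qed.
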